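(* Let $\mathcal{G}_1$ be an arbitrary two-terminal series-parallel graph with source $s_1$, sink $t_1$ and effective resistance $\rho^{\mathrm{eff}}_{s_1,t_1}$ between them. Let $\mathcal{G}_2$ be a 1-path (a single edge) with source $s_2$, sink $t_2$ and effective resistance $\rho^{\mathrm{eff}}_{s_2,t_2}$. For each $i$, consider the leader-follower system on $\mathcal{G}_i$ with the source $s_i$ grounded and control matrix $B_i=e_{t_i}$. Let $\mathcal{H}_2^i$ denote its $\mathcal{H}_2$ norm. If $\rho^{\mathrm{eff}}_{s_1,t_1}=\rho^{\mathrm{eff}}_{s_2,t_2}$, then $(\mathcal{H}_2^1)^2=(\mathcal{H}_2^2)^2$.
   Context: Graphs are undirected with positive edge weights (conductances). Effective resistance is computed in the corresponding electrical network. Two-terminal series-parallel (TTSP) graphs are defined recursively. A single edge with designated source and sink (a 1-path) is TTSP. If $\mathcal{G}_1,\mathcal{G}_2$ are TTSP with sources $s_1,s_2$ and sinks $t_1,t_2$, then: - their series join (identify $t_1$ with $s_2$; new source $s_1$, new sink $t_2$) is TTSP; - their parallel join (identify $s_1$ with $s_2$ and $t_1$ with $t_2$) is TTSP. Multiple edges are allowed. For a TTSP graph with source $s$ grounded (state fixed at $0$), let $L_D$ be the Dirichlet Laplacian: the weighted Laplacian with the row and column of $s$ deleted. The system is $\dot x=-L_Dx+Bu$, $y=x$. Its squared $\mathcal{H}_2$ norm is $-\tfrac12\mathrm{Tr}\big(B^T(-L_D)^{-1}B\big)=\tfrac12\mathrm{Tr}\big(B^TL_D^{-1}B\big)$. 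*)

(* Defs.v *)
From HB Require Import structures.
From mathcomp Require Import all_boot all_order all_algebra.
Set Implicit Arguments. Unset Strict Implicit. Unset Printing Implicit Defensive.
Import Order.TTheory GRing.Theory Num.Theory.
Local Open Scope ring_scope.

(** Two-terminal series-parallel graphs, as syntax trees.  Each leaf is a
    1-path (a single edge) carrying its conductance (edge weight). *)
Inductive ttsp (R : Type) :=
| TEdge of R
| TSer of ttsp R & ttsp R
| TPar of ttsp R & ttsp R.
Arguments TEdge {R}.

Fixpoint ttsp_pos (R : numDomainType) (g : ttsp R) : Prop :=
  match g with
  | TEdge c => 0 < c
  | TSer a b => ttsp_pos a /\ ttsp_pos b
  | TPar a b => ttsp_pos a /\ ttsp_pos b
  end.

(** Realisation of the tree as a concrete multigraph on vertices
    0, ..., nv g - 1, with source = vertex 0 and sink = vertex 1 always. *)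
Fixpoint nv (R : Type) (g : ttsp R) : nat :=
  match g with
  | TEdge _ => 2
  | TSer a b => (nv a + nv b - 1)%N
  | TPar a b => (nv a + nv b - 2)%N
  end.

(* series join: t1 and s2 are identified into the new vertex 2;
   inner vertices of G1 (>= 2) shift by 1, inner vertices of G2 go after. *)
Definition ser1 (v : nat) : nat :=
  if v == 0%N then 0%N else if v == 1%N then 2%N else v.+1.
Definition ser2 (n1 v : nat) : nat :=
  if v == 0%N then 2%N else if v == 1%N then 1%N else (v + n1 - 1)%N.
(* parallel join: s1 = s2 = 0, t1 = t2 = 1; inner vertices of G2 go after
   those of G1. *)
Definition par2 (n1 v : nat) : nat :=
  if (v < 2)%N then v else (v + n1 - 2)%N.

Definition relabel (R : Type) (f : nat -> nat) (E : seq (nat * nat * R)) :=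
  [seq (f e.1.1, f e.1.2, e.2) | e <- E].

Fixpoint edges (R : Type) (g : ttsp R) : seq (nat * nat * R) :=
  match g with
  | TEdge c => [:: (0%N, 1%N, c)]
  | TSer a b => relabel ser1 (edges a) ++ relabel (ser2 (nv a)) (edges b)
  | TPar a b => edges a ++ relabel (par2 (nv a)) (edges b)
  end.

Definition lap_entry (R : nzRingType) (E : seq (nat * nat * R)) (i j : nat) : R :=
  \sum_(e <- E) e.2 * (((e.1.1 == i)%:R - (e.1.2 == i)%:R)
                        * ((e.1.1 == j)%:R - (e.1.2 == j)%:R)).

Definition laplacian (R : nzRingType) (g : ttsp R) : 'M[R]_(nv g) :=
  \matrix_(i, j) lap_entry (edges g) i j.

(** Effective resistance between source (vertex 0) and sink (vertex 1):
    r is the voltage drop v_t - v_s of a potential v when a unit current is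
    injected at t and extracted at s, i.e. L v = e_t - e_s. *)
Definition src_sink (R : nzRingType) (n : nat) : 'cV[R]_n :=
  \col_i (((i : nat) == 1%N)%:R - ((i : nat) == 0%N)%:R).

Definition is_eff_res (R : nzRingType) (g : ttsp R) (r : R) : Prop :=
  exists v : 'cV[R]_(nv g),
    laplacian g *m v = src_sink R (nv g) /\ r = ((src_sink R (nv g))^T *m v) 0 0.

(** Dirichlet Laplacian: row and column of the source (vertex 0) deleted;
    index i of L_D corresponds to vertex i+1, so the sink is index 0. *)
Definition dirichlet_lap (R : nzRingType) (g : ttsp R) : 'M[R]_((nv g).-1) :=
  \matrix_(i, j) lap_entry (edges g) (i : nat).+1 (j : nat).+1.

Definition ctrl_sink (R : nzRingType) (m : nat) : 'cV[R]_m :=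
  \col_i ((i : nat) == 0%N)%:R.

(** squared H2 norm of  x' = -L_D x + B u, y = x :
    -1/2 Tr(B^T (-L_D)^{-1} B) *)
Definition H2sq (R : fieldType) (g : ttsp R) : R :=
  - (1 / 2%:R) * \tr ((ctrl_sink R ((nv g).-1))^T *m invmx (- dirichlet_lap g)
                      *m ctrl_sink R ((nv g).-1)).

(* Main.v *)
Require Import Defs.
From HB Require Import structures.
From mathcomp Require Import all_boot all_order all_algebra.
From mathcomp Require Import zify ring.
Import Order.TTheory GRing.Theory Num.Theory.
Local Open Scope ring_scope.

Lemma nv_ge2 {R : Type} (g : ttsp R) : (2 <= nv g)%N.
Proof. elim: g => [c|a IHa b IHb|a IHa b IHb] /=; lia. Qed.

Lemma edges_lt (R : Type) (g : ttsp R) e :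
  List.In e (edges g) -> (e.1.1 < nv g)%N /\ (e.1.2 < nv g)%N.
Proof.
elim: g e => [c|a IHa b IHb|a IHa b IHb] e /=.
- by case=> [<-|[]].
- have ha := nv_ge2 a; have hb := nv_ge2 b.
  rewrite List.in_app_iff /relabel => -[] /List.in_map_iff [e' [<- he]] /=.
  + have [h1 h2] := IHa _ he; rewrite /ser1; split; case: ifP => /eqP; try lia; case: ifP => /eqP; lia.
  + have [h1 h2] := IHb _ he; rewrite /ser2; split; case: ifP => /eqP; try lia; case: ifP => /eqP; lia.
- have ha := nv_ge2 a; have hb := nv_ge2 b.
  rewrite List.in_app_iff /relabel => -[/IHa|/List.in_map_iff [e' [<- he]]] /=.
  + lia.
  + have [h1 h2] := IHb _ he; rewrite /par2; split; case: ifP; lia.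
Qed.

Lemma edges_pos (R : numDomainType) (g : ttsp R) e :
  ttsp_pos g -> List.In e (edges g) -> 0 < e.2.
Proof.
elim: g e => [c|a IHa b IHb|a IHa b IHb] e /=.
- by move=> hc [<-|[]].
- case=> pa pb; rewrite List.in_app_iff /relabel => -[] /List.in_map_iff [e' [<- he]] /=; eauto.
- case=> pa pb; rewrite List.in_app_iff /relabel => -[|/List.in_map_iff [e' [<- he]]] /=; eauto.
Qed.

Lemma edges_conn {R T : Type} (g : ttsp R) (w : nat -> T) :
  (forall e, List.In e (edges g) -> w e.1.1 = w e.1.2) ->
  forall k, (k < nv g)%N -> w k = w 0%N.
Proof.
elim: g w => [c|a IHa b IHb|a IHa b IHb] w /= H.
- move=> k hk; case: k hk => [|[|k]] // _; symmetry; exact: (H _ (or_introl erefl)).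
- have ha := nv_ge2 a; have hb := nv_ge2 b.
  have Ha : forall k, (k < nv a)%N -> w (ser1 k) = w 0%N.
    move=> k hk; rewrite (IHa (fun x => w (ser1 x))) // => e he.
    apply: (H (ser1 e.1.1, ser1 e.1.2, e.2)); apply List.in_or_app; left.
    by apply List.in_map_iff; exists e.
  have Hb : forall k, (k < nv b)%N -> w (ser2 (nv a) k) = w 0%N.
    move=> k hk; rewrite (IHb (fun x => w (ser2 (nv a) x))) //.
      by rewrite /ser2 /= -(Ha 1%N) //; lia.
    move=> e he.
    apply: (H (ser2 (nv a) e.1.1, ser2 (nv a) e.1.2, e.2)); apply List.in_or_app; right.
    by apply List.in_map_iff; exists e.
  move=> k hk.
  case: (ltnP k 3) => hk3.
  + case: k hk hk3 => [|[|[|k]]] // _ _.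
    * by rewrite -(Hb 1%N) //.
    * by rewrite -(Ha 1%N) //.
  + case: (leqP k (nv a)) => hka.
    * rewrite -(Ha k.-1); last lia. congr w; rewrite /ser1; case: ifP => /eqP; try lia.
      case: ifP => /eqP; lia.
    * rewrite -(Hb (k - nv a + 1)%N); last lia. congr w; rewrite /ser2; case: ifP => /eqP; try lia.
      case: ifP => /eqP; lia.
- have ha := nv_ge2 a; have hb := nv_ge2 b.
  have Ha : forall k, (k < nv a)%N -> w k = w 0%N.
    move=> k hk; rewrite (IHa w) // => e he.
    by apply: H; apply List.in_or_app; left.
  have Hb : forall k, (k < nv b)%N -> w (par2 (nv a) k) = w 0%N.
    move=> k hk; rewrite (IHb (fun x => w (par2 (nv a) x))) //.
    move=> e he.
    apply: (H (par2 (nv a) e.1.1, par2 (nv a) e.1.2, e.2)); apply List.in_or_app; right.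
    by apply List.in_map_iff; exists e.
  move=> k hk.
  case: (ltnP k (nv a)) => hka; first exact: Ha.
  rewrite -(Hb (k - nv a + 2)%N); last lia. congr w; rewrite /par2; case: ifP; lia.
Qed.

Lemma sum_delta (R : nzRingType) (f : nat -> R) (x n : nat) : (x < n)%N ->
  \sum_(k < n) ((x == k)%:R * f k) = f x.
Proof.
move=> hx; rewrite (bigD1 (Ordinal hx)) //= eqxx mul1r big1 ?addr0 //.
move=> k hk; suff -> : (x == k) = false by rewrite mul0r.
apply/negbTE; apply: contra hk => /eqP e; apply/eqP; apply: val_inj => /=; by rewrite e.
Qed.

Lemma lap_sym (R : comNzRingType) (E : seq (nat * nat * R)) i j :
  lap_entry E i j = lap_entry E j i.
Proof.
rewrite /lap_entry; apply: eq_bigr => e _; congr (_ * _); exact: mulrC.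
Qed.

Lemma lap_mul (R : comNzRingType) (E : seq (nat * nat * R)) (n : nat) (f : nat -> R) a :
  (forall e, List.In e E -> (e.1.1 < n)%N /\ (e.1.2 < n)%N) ->
  \sum_(k < n) lap_entry E a k * f k =
  \sum_(e <- E) e.2 * (((e.1.1 == a)%:R - (e.1.2 == a)%:R) * (f e.1.1 - f e.1.2)).
Proof.
move=> HE; rewrite /lap_entry.
under eq_bigr do rewrite mulr_suml.
rewrite exchange_big /=.
elim: E HE => [|e E IH] HE; first by rewrite !big_nil.
rewrite !big_cons IH; last by move=> e' he'; apply: HE; right.
congr (_ + _).
have [h1 h2] := HE e (or_introl erefl).
rewrite -(@sum_delta _ f _ _ h1) -(@sum_delta _ f _ _ h2) -sumrB mulr_sumr mulr_sumr.
apply: eq_bigr => k _.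
set A := (_ - _)%R; set B := ((e.1.1 == k)%:R - _)%R.
by rewrite -mulrBl -!mulrA.
Qed.

Lemma lap_quad (R : comNzRingType) (E : seq (nat * nat * R)) (n : nat) (f : nat -> R) :
  (forall e, List.In e E -> (e.1.1 < n)%N /\ (e.1.2 < n)%N) ->
  \sum_(a < n) f a * \sum_(k < n) lap_entry E a k * f k =
  \sum_(e <- E) e.2 * ((f e.1.1 - f e.1.2) * (f e.1.1 - f e.1.2)).
Proof.
move=> HE.
under eq_bigr do rewrite (@lap_mul _ _ _ _ _ HE) mulr_sumr.
rewrite exchange_big /=.
elim: E HE => [|e E IH] HE; first by rewrite !big_nil.
rewrite !big_cons IH; last by move=> e' he'; apply: HE; right.
congr (_ + _).
have [h1 h2] := HE e (or_introl erefl).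
rewrite -[X in _ * (_ * (X - _))](@sum_delta _ f _ _ h1).
rewrite -[X in _ * (_ * (_ - X))](@sum_delta _ f _ _ h2).
rewrite -sumrB mulr_sumr mulr_sumr.
apply: eq_bigr => k _.
set A := (f e.1.1 - _)%R; set B := ((e.1.1 == k)%:R - _)%R.
rewrite -mulrBl -/B; ring.
Qed.

Lemma psum_In (R : numDomainType) (T : Type) (E : seq T) (F : T -> R) :
  (forall e, List.In e E -> 0 <= F e) -> \sum_(e <- E) F e = 0 ->
  forall e, List.In e E -> F e = 0.
Proof.
elim: E => [|x E IH] H /=; first by [].
rewrite big_cons => hs.
have h1 : 0 <= F x by apply: H; left.
have h2 : 0 <= \sum_(e <- E) F e.
  elim: E {IH hs} H => [|y E' IH'] H; first by rewrite big_nil.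
  rewrite big_cons addr_ge0 //; first by apply: H; right; left.
  by apply: IH' => e he; apply: H; move: he => /= [->|]; [left|right; right].
move/eqP: hs; rewrite paddr_eq0 // => /andP [/eqP hx /eqP hE].
move=> e [<-|he] //; apply: IH => // e' he'; apply: H; by right.
Qed.

Lemma dl_unit (R : realFieldType) (g : ttsp R) :
  ttsp_pos g -> dirichlet_lap g \in unitmx.
Proof.
move=> hp.
have hn : ((nv g).-1).+1 = nv g by rewrite prednK // (leq_trans _ (nv_ge2 g)).
have HE : forall e, List.In e (edges g) -> (e.1.1 < ((nv g).-1).+1)%N /\ (e.1.2 < ((nv g).-1).+1)%N.
  by rewrite hn; exact: edges_lt.
rewrite unitmxE unitfE; apply/negP => /det0P [v vn0 hv].
move/negP: vn0; apply; apply/eqP/rowP => j; rewrite !mxE.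
set m := (nv g).-1 in v hv j HE hn *.
pose f := fun k : nat => \sum_(i < m) (k == i.+1)%:R * v 0 i.
have f0 : f 0%N = 0 by apply: big1 => i _; rewrite mul0r.
have fS : forall i : 'I_m, f i.+1 = v 0 i.
  move=> i; rewrite /f (bigD1 i) //= eqxx mul1r big1 ?addr0 // => k hk.
  rewrite eqSS; suff -> : (nat_of_ord i == k) = false by rewrite mul0r.
  by apply/negbTE; rewrite eq_sym.
have hvj : forall j : 'I_m, (v *m dirichlet_lap g) 0 j = \sum_(k < m.+1) lap_entry (edges g) j.+1 k * f k.
  move=> i; rewrite mxE big_ord_recl /= f0 mulr0 add0r.
  by apply: eq_bigr => k _; rewrite mxE lap_sym fS mulrC.
have hQ : \sum_(a < m.+1) f a * \sum_(k < m.+1) lap_entry (edges g) a k * f k = 0.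
  have h0 : \sum_(i < m) (v *m dirichlet_lap g) 0 i * v 0 i = 0.
    by apply: big1 => i _; rewrite hv mxE mul0r.
  rewrite big_ord_recl f0 mul0r add0r -[RHS]h0.
  by apply: eq_bigr => i _; rewrite hvj fS mulrC.
rewrite (@lap_quad _ _ _ _ HE) in hQ.
have H0 := @psum_In _ _ _ _ _ hQ.
have Hc : forall k, (k < nv g)%N -> f k = f 0%N.
  apply: edges_conn => e he.
  have ep := @edges_pos _ _ _ hp he.
  have Hnn : forall e, List.In e (edges g) -> 0 <= e.2 * ((f e.1.1 - f e.1.2) * (f e.1.1 - f e.1.2)).
    move=> e' he'; apply: mulr_ge0; [exact: ltW (@edges_pos _ _ _ hp he') | rewrite -expr2; exact: sqr_ge0].
  move: (H0 Hnn e he) => /eqP; rewrite mulf_eq0 (gt_eqF ep) /= mulf_eq0 orbb subr_eq0 => /eqP.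
  by [].
have hj : (j.+1 < nv g)%N by rewrite -hn ltnS.
by rewrite -fS (Hc _ hj) f0.
Qed.

Lemma H2_eff (R : realFieldType) (g : ttsp R) (r : R) :
  ttsp_pos g -> is_eff_res g r -> H2sq g = r / 2%:R.
Proof.
move=> hp [v [hL ->]].
have h2 := nv_ge2 g.
have hn : ((nv g).-1).+1 = nv g by rewrite prednK // (leq_trans _ h2).
have HE := @edges_lt _ g.
have HE' : forall e, List.In e (edges g) -> (e.1.1 < ((nv g).-1).+1)%N /\ (e.1.2 < ((nv g).-1).+1)%N.
  by rewrite hn; exact: edges_lt.
have hU := @dl_unit _ _ hp.
pose F := fun k : nat => \sum_(i < nv g) (k == i)%:R * v i 0.
have FS : forall i : 'I_(nv g), F i = v i 0.
  move=> i; rewrite /F (bigD1 i) //= eqxx mul1r big1 ?addr0 // => k hk.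
  suff -> : (nat_of_ord i == k) = false by rewrite mul0r.
  by apply/negbTE; rewrite eq_sym.
pose u : 'cV_((nv g).-1) := \col_(i < (nv g).-1) (F i.+1 - F 0%N).
have hu : dirichlet_lap g *m u = ctrl_sink R (nv g).-1.
  apply/colP => i; rewrite !mxE.
  have hi : (i.+1 < nv g)%N.
    have := ltn_ord i; by move=> h; rewrite -[X in (_ < X)%N]hn ltnS.
  transitivity (\sum_(k < (nv g).-1.+1) lap_entry (edges g) i.+1 k * (F k - F 0%N)).
    rewrite big_ord_recl /= subrr mulr0 add0r.
    by apply: eq_bigr => k _; rewrite !mxE.
  rewrite (@lap_mul _ _ _ (fun k => F k - F 0%N) _ HE').
  transitivity (\sum_(k < nv g) lap_entry (edges g) i.+1 k * F k).
    rewrite (@lap_mul _ _ _ F _ HE); apply: eq_bigr => e _.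
    by rewrite opprB addrA subrK.
  move/colP: hL => /(_ (Ordinal hi)); rewrite !mxE /= => H.
  rewrite -[((i : nat) == 0%N)%:R]subr0 -[(i : nat) == 0%N]/(i.+1 == 1%N)%N -H.
  apply: eq_bigr => k _; by rewrite !mxE FS.
have hu' : u = invmx (dirichlet_lap g) *m ctrl_sink R (nv g).-1 by rewrite -hu mulKmx.
have h0 : (0 < (nv g).-1)%N by rewrite -ltnS hn.
pose i0 := Ordinal h0.
have hr : ((src_sink R (nv g))^T *m v) 0 0 = u i0 0.
  rewrite !mxE /=.
  transitivity (\sum_(k < nv g) (((1%N == k)%:R - (0%N == k)%:R) * F k)).
    by apply: eq_bigr => k _; rewrite !mxE FS [1%N == _]eq_sym [0%N == _]eq_sym.
  under eq_bigr do rewrite mulrBl.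
  by rewrite sumrB !(@sum_delta _ F) // (leq_trans _ h2).
have hinv : invmx (- dirichlet_lap g) = - invmx (dirichlet_lap g).
  rewrite -scaleN1r invmxZ ?unitmxZ ?unitrN1 // invrN1 scaleN1r //.
rewrite hr /H2sq hinv -mulmxA mulNmx -hu' trace_mx11 mxE (bigD1 i0) //= big1.
  by rewrite !mxE /= mul1r addr0 mul1r mulNr mulrN opprK mulrC.
move=> k hk; rewrite !mxE.
suff -> : ((k : nat) == 0%N) = false by rewrite mul0r.
by apply/negbTE; apply: contra hk => /eqP e; apply/eqP; apply: val_inj.
Qed.

Theorem lemma5 (R : realFieldType) (g1 : ttsp R) (c2 r1 r2 : R) :
  ttsp_pos g1 -> 0 < c2 ->
  is_eff_res g1 r1 -> is_eff_res (TEdge c2) r2 ->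
  r1 = r2 ->
  H2sq g1 = H2sq (TEdge c2).
Proof.
move=> h1 h2 e1 e2 er; subst r2.
rewrite (@H2_eff _ _ _ h1 e1).
have h2' : ttsp_pos (TEdge c2) by [].
by rewrite (@H2_eff _ _ _ h2' e2).
Qed.
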